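(* (i) Let $h:\omega\to\omega\setminus\{0,1\}$ be nondecreasing and $g(n)=h(2n)$. Then $\mathfrak d(\neq^*,h)=\mathfrak d(\neq^*,g)$ and $\mathfrak b(\neq^*,h)=\mathfrak b(\neq^*,g)$. (ii) For all real numbers $a,b>1$, $\mathfrak d(\neq^*,n\mapsto2^{(a^n)})=\mathfrak d(\neq^*,n\mapsto2^{(b^n)})$ and $\mathfrak b(\neq^*,n\mapsto2^{(a^n)})=\mathfrak b(\neq^*,n\mapsto2^{(b^n)})$.
   Context: For a function $h$, a function $y:\omega\to\omega$ is $h$-bounded if $y(n)<h(n)$ for all $n$. $\mathfrak d(\neq^*,h)$ is the least cardinality of a set $G$ of $h$-bounded functions such that for every $x\in{}^\omega\omega$ there is $y\in G$ with $x(n)\neq y(n)$ for all but finitely many $n$. $\mathfrak b(\neq^*,h)$ is the least cardinality of a set $F\subseteq{}^\omega\omega$ such that for every $h$-bounded $y$ there is $x\in F$ with $x(n)=y(n)$ for infinitely many $n$. The statements are theorems of ZFC. *)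

(* Defs.v *)
From HB Require Import structures.
From mathcomp Require Import all_boot all_order all_algebra.
From mathcomp Require Import all_classical all_reals all_analysis.
Set Implicit Arguments. Unset Strict Implicit. Unset Printing Implicit Defensive.
Import Order.TTheory GRing.Theory Num.Theory.
Local Open Scope classical_set_scope.
Local Open Scope ring_scope.
Local Open Scope card_scope.

(* The bound H of "H-bounded" is allowed to be real valued, so that the
   bounds n |-> 2^(a^n) of part (ii) can be used literally.  For a
   nat-valued h we use H n = (h n)%:R. *)
Definition bounded_by (R : realType) (H : nat -> R) (y : nat -> nat) : Prop :=
  forall n : nat, ((y n)%:R : R) < H n.

Definition d_family (R : realType) (H : nat -> R) (G : set (nat -> nat)) : Prop :=
  (forall y, G y -> bounded_by H y) /\
  (forall x : nat -> nat, exists y, G y /\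
      exists N : nat, forall n : nat, (N <= n)%N -> x n <> y n).

Definition b_family (R : realType) (H : nat -> R) (F : set (nat -> nat)) : Prop :=
  forall y : nat -> nat, bounded_by H y ->
    exists x, F x /\ forall N : nat, exists n : nat, (N <= n)%N /\ x n = y n.

(* d(neq*,H1) <= d(neq*,H2): every witness for H2 has a witness for H1 of
   at most its cardinality. (Cardinals are the least sizes of witnesses.) *)
Definition d_le (R : realType) (H1 H2 : nat -> R) : Prop :=
  forall G2, d_family H2 G2 -> exists G1, d_family H1 G1 /\ G1 #<= G2.
Definition d_eq (R : realType) (H1 H2 : nat -> R) : Prop :=
  d_le H1 H2 /\ d_le H2 H1.

Definition b_le (R : realType) (H1 H2 : nat -> R) : Prop :=
  forall F2, b_family H2 F2 -> exists F1, b_family H1 F1 /\ F1 #<= F2.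
Definition b_eq (R : realType) (H1 H2 : nat -> R) : Prop :=
  b_le H1 H2 /\ b_le H2 H1.

(* Main.v *)
Require Import Defs.
From HB Require Import structures.
From mathcomp Require Import all_boot all_order all_algebra.
From mathcomp Require Import all_classical all_reals all_analysis.
From mathcomp Require Import zify ring lra.
Import Order.TTheory GRing.Theory Num.Theory.
Set Implicit Arguments. Unset Strict Implicit.

Section PZorn.
Variables (X Y : Type) (good : set X -> (X -> Y) -> Prop).
Definition pext (o o' : set X * (X -> Y)) : Prop :=
  (forall x, o.1 x -> o'.1 x) /\ (forall x, o.1 x -> o.2 x = o'.2 x).
Definition chainC (C : set (set X * (X -> Y))) :=
  forall c1 c2, C c1 -> C c2 -> pext c1 c2 \/ pext c2 c1.
Definition UD (C : set (set X * (X -> Y))) : set X :=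
  fun x => exists c, C c /\ c.1 x.
Variable f0 : X -> Y.
Definition UF (C : set (set X * (X -> Y))) (x : X) : Y :=
  match pselect (exists c, C c /\ c.1 x) with
  | left H => (projT1 (cid H)).2 x
  | right _ => f0 x end.

Lemma UF_spec C c x : chainC C -> C c -> c.1 x -> UF C x = c.2 x.
Proof.
move=> ch Cc cx; rewrite /UF; case: pselect => [H|H]; last by exfalso; apply: H; exists c.
case: (cid H) => c' [Cc' c'x] /=.
by case: (ch c c' Cc Cc') => [[_ e]|[_ e]]; [rewrite e | rewrite -e].
Qed.

Lemma UD_chain2 C x y : chainC C -> UD C x -> UD C y ->
  exists c, C c /\ c.1 x /\ c.1 y.
Proof.
move=> ch [c1 [C1 x1]] [c2 [C2 y2]].
case: (ch c1 c2 C1 C2) => [[s _]|[s _]]; [exists c2 | exists c1]; split=>//; split => //; auto.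
Qed.

Hypothesis chain_good : forall C, (exists c, C c) ->
  (forall c, C c -> good c.1 c.2) -> chainC C -> good (UD C) (UF C).
Variable D0 : set X.
Hypothesis good0 : good D0 f0.

Lemma pzorn : exists D f, good D f /\
  forall D' f', good D' f' -> pext (D,f) (D',f') -> forall x, D' x -> D x.
Proof.
pose T := {o : set X * (X -> Y) | good o.1 o.2}.
pose t0 : T := exist _ (D0, f0) good0.
pose R := fun s t : T => `[< pext (sval s) (sval t) >].
case: (@ZL_preorder T t0 R).
- by move=> t; apply/asboolP; split.
- move=> r s t /asboolP[h1 h2] /asboolP[h3 h4]; apply/asboolP; split=> x Hx.
    by apply: h3; apply: h1.
  by rewrite h2 // h4 //; apply: h1.
- move=> A tot.
  case: (pselect (exists s, A s)) => [[s0 As0]|nA]; last first.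
    by exists t0 => s As; exfalso; apply: nA; exists s.
  pose C := fun o => exists s, A s /\ sval s = o.
  have Cne : exists c, C c by exists (sval s0), s0.
  have Cg : forall c, C c -> good c.1 c.2 by move=> c [s [_ <-]]; exact: (svalP s).
  have ch : chainC C.
    move=> c1 c2 [s1 [A1 <-]] [s2 [A2 <-]].
    by case: (tot s1 s2 A1 A2) => /asboolP; auto.
  exists (exist _ (UD C, UF C) (chain_good Cne Cg ch)) => s As.
  apply/asboolP; split => /= x Hx.
    by exists (sval s); split => //; exists s.
  by rewrite (UF_spec ch _ Hx) //; exists s.
- move=> [[D f] gt] tmax; exists D, f; split => // D' f' g' e x Hx.
  have := tmax (exist _ (D',f') g'); rewrite /R /=.
  by move=> /(_ (asboolT e)) /asboolP [+ _]; apply.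
Qed.
End PZorn.

Definition cle T (A B : set T) := exists f : T -> T,
  (forall x, A x -> B (f x)) /\ (forall x y, A x -> A y -> f x = f y -> x = y).

Lemma cle_total T (t0 : T) (A B : set T) : cle A B \/ cle B A.
Proof.
pose good := fun (D : set T) (f : T -> T) =>
  (forall x, D x -> A x) /\ (forall x, D x -> B (f x)) /\
  (forall x y, D x -> D y -> f x = f y -> x = y).
have g0 : good set0 id.
  split; [by move=> x []|split; [by move=> x []| by move=> x y []]].
have cg : forall C, (exists c, C c) ->
  (forall c, C c -> good c.1 c.2) -> chainC C -> good (UD C) (UF id C).
  move=> C Cne Cg ch; split; [|split].
  + by move=> x [c [Cc cx]]; case: (Cg c Cc) => + _; apply.
  + move=> x [c [Cc cx]]; rewrite (UF_spec _ ch Cc cx).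
    by case: (Cg c Cc) => _ [+ _]; apply.
  + move=> x y Ux Uy; case: (UD_chain2 ch Ux Uy) => c [Cc [cx cy]].
    rewrite (UF_spec _ ch Cc cx) (UF_spec _ ch Cc cy).
    by case: (Cg c Cc) => _ [_]; apply.
have [D [f [[DA [fB finj]] mx]]] := pzorn cg g0.
case: (pselect (exists a, A a /\ ~ D a)) => [[a [Aa nDa]]|H]; last first.
  have AD : forall x, A x -> D x.
    by move=> x Ax; apply: contrapT => nD; apply: H; exists x.
  left; exists f; split; first by move=> x /AD /fB.
  by move=> x y /AD Dx /AD Dy; apply: (finj).
case: (pselect (exists b, B b /\ forall x, D x -> f x <> b)) => [[b [Bb nb]]|H]; last first.
  right.
  have HB : forall y, B y -> exists x, D x /\ f x = y.
    move=> y By; apply: contrapT => nx; apply: H; exists y; split => // x Dx fx.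
    by apply: nx; exists x.
  pose g := fun y => match pselect (exists x, D x /\ f x = y) with
    | left H => projT1 (cid H) | right _ => t0 end.
  have gP : forall y, B y -> D (g y) /\ f (g y) = y.
    move=> y By; rewrite /g; case: pselect => [H1|H1]; last by exfalso; apply: H1; apply: HB.
    by case: (cid H1).
  exists g; split.
    by move=> y By; apply: (DA); case: (gP y By).
  move=> y y' By By' e.
  by case: (gP y By) => _ <-; case: (gP y' By') => _ <-; rewrite e.
exfalso; move: (nDa); apply.
pose f' := fun x => match pselect (x = a) with left _ => b | right _ => f x end.
apply: (mx (fun x => D x \/ x = a) f') => //; last by right.
- split; [|split].
  + by move=> x [/DA|->].
  + move=> x [Dx|->]; rewrite /f'; case: pselect => // xa; first [by apply: (fB) | by exfalso; apply: xa].
  + move=> x y; rewrite /f'.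
    case: pselect => [->|xa]; case: pselect => [->|ya] //.
    * move=> _ [Dy|//] e; exfalso; exact: (nb y Dy (esym e)).
    * move=> [Dx|//] _ e; exfalso; exact: (nb x Dx e).
    * by move=> [Dx|//] [Dy|//]; apply: (finj).
- split => x Dx /=; first by left.
  rewrite /f'; case: pselect => // xa.
  by exfalso; apply: nDa; rewrite -xa.
Qed.

Lemma hessenberg T (A : set T) (e : nat -> T) :
  (forall n, A (e n)) -> injective e ->
  exists F : T * T -> T, (forall p, A p.1 -> A p.2 -> A (F p)) /\
   (forall p q, A p.1 -> A p.2 -> A q.1 -> A q.2 -> F p = F q -> p = q).
Proof.
move=> Ae einj.
pose good := fun (D : set (T * T)) (f : T * T -> T) =>
  [/\ (forall p, D p <-> D (p.1,p.1) /\ D (p.2,p.2)),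
      (forall n, D (e n, e n)),
      (forall t, D (t,t) -> A t),
      (forall p, D p -> D (f p, f p)) &
      (forall p q, D p -> D q -> f p = f q -> p = q)].
pose einv := fun t => match pselect (exists n, e n = t) with
  | left H => projT1 (cid H) | right _ => 0%N end.
have einvK : forall n, einv (e n) = n.
  move=> n; rewrite /einv; case: pselect => [H|H]; last by exfalso; apply: H; exists n.
  by case: (cid H) => m /= /einj.
pose D0 := fun p : T * T => exists m n, p = (e m, e n).
pose f0 := fun p : T * T => e (pickle (einv p.1, einv p.2)).
have g0 : good D0 f0.
  split.
  - case=> [p1 p2] /=; split.
      by move=> [m [n [-> ->]]]; split; [exists m, m | exists n, n].
    by move=> [[m [m' [-> _]]] [n [n' [-> _]]]]; exists m, n.
  - by move=> n; exists n, n.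
  - by move=> t [m [n [-> _]]].
  - by move=> p _; exists (pickle (einv p.1, einv p.2)), (pickle (einv p.1, einv p.2)).
  - move=> p q [m [n ->]] [m' [n' ->]]; rewrite /f0 /= => /einj /(pcan_inj pickleK).
    by rewrite !einvK => -[-> ->].
have cg : forall C, (exists c, C c) ->
  (forall c, C c -> good c.1 c.2) -> chainC C -> good (UD C) (UF f0 C).
  move=> C [c0 Cc0] Cg ch; split.
  - move=> p; split.
      move=> [c [Cc cp]]; have [sq _ _ _ _] := Cg c Cc.
      by have [h1 h2] := (iffLR (sq p) cp); split; exists c.
    move=> [U1 U2]; have [c [Cc [c1 c2]]] := UD_chain2 ch U1 U2.
    by have [sq _ _ _ _] := Cg c Cc; exists c; split => //; apply/sq.
  - by move=> n; exists c0; split => //; have [_ + _ _ _] := Cg c0 Cc0; apply.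
  - by move=> t [c [Cc ct]]; have [_ _ + _ _] := Cg c Cc; apply.
  - move=> p [c [Cc cp]]; rewrite (UF_spec _ ch Cc cp).
    by exists c; split => //; have [_ _ _ + _] := Cg c Cc; apply.
  - move=> p q Up Uq; have [c [Cc [cp cq]]] := UD_chain2 ch Up Uq.
    rewrite (UF_spec _ ch Cc cp) (UF_spec _ ch Cc cq).
    by have [_ _ _ _] := Cg c Cc; apply.
have [D [f [[sq De DA fcl finj] mx]]] := pzorn cg g0.
pose B := fun t => D (t, t).
have DB : forall p, D p <-> B p.1 /\ B p.2 by move=> p; apply: sq.
have Bf : forall p, B p.1 -> B p.2 -> B (f p).
  by move=> p b1 b2; apply: (fcl); apply/DB.
have finjB : forall p q, B p.1 -> B p.2 -> B q.1 -> B q.2 -> f p = f q -> p = q.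
  by move=> p q p1 p2 q1 q2; apply: (finj); apply/DB.
have e01 : e 0%N <> e 1%N by move=> /einj.
have claim1 : cle (fun t => A t /\ ~ B t) B.
  case: (cle_total (e 0%N) (fun t => A t /\ ~ B t) B) => // -[i [iB iinj]].
  exfalso.
  pose C := fun t => exists s, B s /\ i s = t.
  pose r := fun t => if pselect (B t) then t else
     match pselect (C t) with left H => projT1 (cid H) | right _ => t end.
  have rB : forall t, B t \/ C t -> B (r t).
    move=> t; rewrite /r; case: pselect => // nB [//|Ct].
    case: pselect => [H|]; last by [].
    by case: (cid H) => s [].
  have rBid : forall t, B t -> r t = t by move=> t Bt; rewrite /r; case: pselect.
  have rC : forall t, ~ B t -> C t -> i (r t) = t.
    move=> t nB Ct; rewrite /r; case: (pselect (B t)) => [Bt|nBt] /=; first by case: nB.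
    case: pselect => [H|]; last by [].
    by case: (cid H) => s [].
  pose tag := fun t => `[< B t >].
  pose zz := fun b1 b2 : bool => if b1 then e 0%N else if b2 then e 1%N else e 2%N.
  have zzB : forall b1 b2, B (zz b1 b2) by move=> [] []; apply: (De).
  have zzinj : forall b1 b2 c1 c2, ~~ (b1 && b2) -> ~~ (c1 && c2) ->
      zz b1 b2 = zz c1 c2 -> b1 = c1 /\ b2 = c2.
    by move=> [] [] [] [] //= _ _ /einj.
  have coord : forall t u, B t \/ C t -> B u \/ C u -> tag t = tag u ->
      r t = r u -> t = u.
    move=> t u Ht Hu; rewrite /tag; case: (pselect (B t)) => [Bt|nBt].
      rewrite (asboolT Bt) => /esym /asboolP Bu.
      by rewrite !rBid.
    rewrite (asboolF nBt) => /esym /asboolP nBu.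
    have Ct : C t by case: Ht.
    have Cu : C u by case: Hu.
    by move=> eq; rewrite -(rC t) // -(rC u) // eq.
  pose F := fun p : T * T => if pselect (B p.1 /\ B p.2) then f p
    else i (f (f (r p.1, r p.2), zz (tag p.1) (tag p.2))).
  pose D' := fun p : T * T => (B p.1 \/ C p.1) /\ (B p.2 \/ C p.2).
  have Bw : forall p, D' p -> B (f (f (r p.1, r p.2), zz (tag p.1) (tag p.2))).
    by move=> p [H1 H2]; apply: (Bf) => //=; apply: (Bf); apply: (rB).
  have FB : forall p, B p.1 /\ B p.2 -> F p = f p.
    by move=> p h; rewrite /F; case: pselect => // nh; case: nh.
  have FnB : forall p, ~ (B p.1 /\ B p.2) ->
      F p = i (f (f (r p.1, r p.2), zz (tag p.1) (tag p.2))).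
    by move=> p h; rewrite /F; case: pselect => // nh; case: h.
  have nBF : forall p, D' p -> ~ (B p.1 /\ B p.2) -> ~ B (F p).
    by move=> p Dp nb; rewrite FnB //; have [] := iB _ (Bw p Dp).
  have tagnb : forall p, ~ (B p.1 /\ B p.2) -> ~~ (tag p.1 && tag p.2).
    by move=> p nb; apply/negP => /andP[/asboolP ? /asboolP ?]; apply: nb.
  have Bfr : forall p, D' p -> B (f (r p.1, r p.2)).
    by move=> p [p1 p2]; apply: (Bf); apply: (rB).
  have gD' : good D' F.
    split.
    - by move=> p; rewrite /D' /=; tauto.
    - by move=> n; split => /=; left; apply: (De).
    - move=> t; rewrite /D' /= => -[[Bt|[s [Bs <-]]] _]; first by apply: (DA).
      by have [] := iB s Bs.
    - move=> p Dp; case: (pselect (B p.1 /\ B p.2)) => [[b1 b2]|nb].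
        by rewrite FB //; split; left; apply: (Bf).
      rewrite FnB //.
      by split; right; exists (f (f (r p.1, r p.2), zz (tag p.1) (tag p.2))); split => //; apply: (Bw).
    - move=> p q Dp Dq; case: (pselect (B p.1 /\ B p.2)) => bp;
        case: (pselect (B q.1 /\ B q.2)) => bq.
      + rewrite !FB //; case: bp => ? ?; case: bq => ? ?; exact: (finjB).
      + move=> Fe; exfalso; apply: (nBF q Dq bq); rewrite -Fe FB //.
        by case: bp => ? ?; apply: (Bf).
      + move=> Fe; exfalso; apply: (nBF p Dp bp); rewrite Fe FB //.
        by case: bq => ? ?; apply: (Bf).
      + rewrite !FnB // => /(iinj _ _ (Bw p Dp) (Bw q Dq)).
        move=> /(finjB (_, _) (_, _) (Bfr p Dp) (zzB _ _) (Bfr q Dq) (zzB _ _)) [].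
        case: (Dp) => p1 p2; case: (Dq) => q1 q2.
        move=> /(finjB (_, _) (_, _) (rB _ p1) (rB _ p2) (rB _ q1) (rB _ q2)) [e1 e2].
        move=> /(zzinj _ _ _ _ (tagnb p bp) (tagnb q bq)) [t1 t2].
        by apply: injective_projections; apply: coord.
  have := mx D' F gD'.
  have ext' : pext (D, f) (D', F).
    split => p /= Dp.
      by have [b1 b2] := iffLR (DB p) Dp; split; left.
    by rewrite FB //; apply/DB.
  move=> /(_ ext' (i (e 0%N), i (e 0%N))) /=.
  have Ci : C (i (e 0%N)) by exists (e 0%N); split => //; apply: (De).
  by move=> /(_ (conj (or_intror Ci) (or_intror Ci))); case: (iB _ (De 0%N)).
case: claim1 => j [jB jinj].
pose k := fun t => if pselect (B t) then f (t, e 0%N) else f (j t, e 1%N).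
have kB : forall t, A t -> B (k t).
  move=> t At; rewrite /k; case: pselect => Bt; apply: (Bf) => //=; try exact: (De).
  by apply: (jB).
have kinj : forall t u, A t -> A u -> k t = k u -> t = u.
  move=> t u At Au; rewrite /k; case: pselect => Bt; case: pselect => Bu.
  - by move=> /(finjB (_, _) (_, _) Bt (De 0%N) Bu (De 0%N)) [].
  - by move=> /(finjB (_, _) (_, _) Bt (De 0%N) (jB u (conj Au Bu)) (De 1%N)) [_ /einj].
  - by move=> /(finjB (_, _) (_, _) (jB t (conj At Bt)) (De 1%N) Bu (De 0%N)) [_ /einj].
  - move=> /(finjB (_, _) (_, _) (jB t (conj At Bt)) (De 1%N) (jB u (conj Au Bu)) (De 1%N)) [].
    by move=> /jinj; apply.
exists (fun p => f (k p.1, k p.2)); split.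
  by move=> p p1 p2; apply: (DA); apply: (fcl); apply/DB; split; apply: (kB).
move=> [p1 p2] [q1 q2] /= a1 a2 b1 b2.
move=> /(finjB (_, _) (_, _) (kB _ a1) (kB _ a2) (kB _ b1) (kB _ b2)) [].
by move=> /kinj -> // /kinj ->.
Qed.
Local Open Scope classical_set_scope.
Local Open Scope ring_scope.

Lemma not_io (P : nat -> Prop) : ~ (forall N : nat, exists n : nat, (N <= n)%N /\ P n) ->
  exists N : nat, forall n, (N <= n)%N -> ~ P n.
Proof.
move=> h; apply: contrapT => h'; apply: h => N; apply: contrapT => h2; apply: h'.
by exists N => n Nn Pn; apply: h2; exists n.
Qed.

Section Main.
Variable R : realType.

Lemma d_le_trans (H1 H2 H3 : nat -> R) : d_le H1 H2 -> d_le H2 H3 -> d_le H1 H3.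
Proof.
move=> h12 h23 G3 /h23 [G2 [w2 c2]]; have [G1 [w1 c1]] := h12 G2 w2.
by exists G1; split => //; exact: card_le_trans c1 c2.
Qed.

Lemma b_le_trans (H1 H2 H3 : nat -> R) : b_le H1 H2 -> b_le H2 H3 -> b_le H1 H3.
Proof.
move=> h12 h23 G3 /h23 [G2 [w2 c2]]; have [G1 [w1 c1]] := h12 G2 w2.
by exists G1; split => //; exact: card_le_trans c1 c2.
Qed.

Lemma d_le_mono (H1 H2 : nat -> R) : (forall n, H1 n <= H2 n) -> d_le H2 H1.
Proof.
move=> le G [bd cov]; exists G; split; last exact: card_lexx.
by split => // y Gy n; exact: lt_le_trans (bd y Gy n) (le n).
Qed.

Lemma b_le_mono (H1 H2 : nat -> R) : (forall n, H1 n <= H2 n) -> b_le H1 H2.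
Proof.
move=> le F wF; exists F; split; last exact: card_lexx.
by move=> y hy; apply: wF => n; exact: lt_le_trans (hy n) (le n).
Qed.

Lemma d_witness_infinite (H : nat -> R) G : d_family H G ->
  exists e : nat -> (nat -> nat), (forall n, G (e n)) /\ injective e.
Proof.
move=> [bd cov].
have avoid : forall (f : nat -> (nat -> nat)) n, exists y, G y /\
    forall i, (i < n)%N -> y <> f i.
  move=> f n; apply: contrapT => hn.
  have hG : forall y, G y -> exists i, (i < n)%N /\ y = f i.
    move=> y Gy; apply: contrapT => hy; apply: hn; exists y; split => // i ilt yi.
    by apply: hy; exists i.
  have [y0 [Gy0 _]] := cov (fun _ => 0%N).
  have [i0 [i0n _]] := hG y0 Gy0.
  pose x := fun m => f (m %% n)%N m.
  have [y [Gy [N hN]]] := cov x.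
  have [i [iln yi]] := hG y Gy.
  apply: (hN (N * n + i)%N); first by nia.
  by rewrite yi /x modnMDl modn_small.
have [nx hnx] := choice (fun fn : (nat -> (nat -> nat)) * nat =>
  avoid fn.1 fn.2).
pose E := fix E (n : nat) : nat -> (nat -> nat) := match n with
  | 0%N => fun _ => nx (fun _ => fun _ => 0%N, 0%N)
  | m.+1 => fun i => if (i < m)%N then E m i else nx (E m, m) end.
pose e := fun n => nx (E n, n).
have Ee : forall m i, (i < m)%N -> E m i = e i.
  elim=> [|m IH] i // ilt /=.
  case: ifP => [im|im]; first by rewrite IH.
  by have -> : i = m by lia.
exists e; split; first by move=> n; case: (hnx (E n, n)).
have ne : forall i n, (i < n)%N -> e n <> e i.
  move=> i n ilt; case: (hnx (E n, n)) => _ /= /(_ i ilt).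
  by rewrite Ee.
move=> i j eij; case: (ltngtP i j) => // [ij|ji].
  by exfalso; apply: (ne i j ij); rewrite eij.
by exfalso; apply: (ne j i ji); rewrite eij.
Qed.

Lemma d_le_double (H : nat -> R) : (forall m n, (m <= n)%N -> H m <= H n) ->
  d_le H (fun n => H (2 * n)%N).
Proof.
move=> Hmono G [bd cov].
have [e [eG einj]] := d_witness_infinite (conj bd cov).
have [P [PG Pinj]] := hessenberg eG einj.
pose comb := fun yz : (nat -> nat) * (nat -> nat) => fun m =>
  if (m %% 2 == 1)%N then yz.2 (m %/ 2)%N else yz.1 (m %/ 2)%N.
exists [set comb yz | yz in [set yz | G yz.1 /\ G yz.2]]; split.
- split.
  + move=> _ [[y z] [/= Gy Gz] <-] m; rewrite /comb /=.
    have hm : H (2 * (m %/ 2))%N <= H m by apply: Hmono; lia.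
    by case: ifP => _; [exact: lt_le_trans (bd z Gz _) hm | exact: lt_le_trans (bd y Gy _) hm].
  + move=> x.
    have [y [Gy [N1 h1]]] := cov (fun n => x (2 * n)%N).
    have [z [Gz [N2 h2]]] := cov (fun n => x (2 * n + 1)%N).
    exists (comb (y, z)); split; first by exists (y, z).
    exists (2 * (N1 + N2))%N => m Nm; rewrite /comb /=.
    case: ifP => /eqP m2.
      have := h2 (m %/ 2)%N; have -> : (2 * (m %/ 2) + 1 = m)%N by lia.
      by apply; lia.
    have := h1 (m %/ 2)%N; have -> : (2 * (m %/ 2) = m)%N by lia.
    by apply; lia.
- apply: card_le_trans (card_image_le _ _) _.
  apply/pcard_leP; apply/injfunPex; exists P.
    by move=> p [p1 p2]; apply: PG.
  by move=> p q /set_mem [p1 p2] /set_mem [q1 q2]; apply: Pinj.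
Qed.

Lemma b_le_double (H : nat -> R) : (forall m n, (m <= n)%N -> H m <= H n) ->
  b_le (fun n => H (2 * n)%N) H.
Proof.
move=> Hmono F wF.
pose pe := fun (x : nat -> nat) n => x (2 * n)%N.
pose po := fun (x : nat -> nat) n => x (2 * n + 1)%N.
case: (pselect (b_family (fun n => H (2 * n)%N) [set pe x | x in F])) => [we|ne].
  by exists [set pe x | x in F]; split => //; exact: card_image_le.
case: (pselect (b_family (fun n => H (2 * n)%N) [set po x | x in F])) => [wo|no].
  by exists [set po x | x in F]; split => //; exact: card_image_le.
exfalso.
move/existsNP: ne => [ye] /not_implyP [bye nye].
move/existsNP: no => [yo] /not_implyP [byo nyo].
pose y := fun m => if (m %% 2 == 1)%N then yo (m %/ 2)%N else ye (m %/ 2)%N.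
have by_ : bounded_by H y.
  move=> m; rewrite /y.
  have hm : H (2 * (m %/ 2))%N <= H m by apply: Hmono; lia.
  have hm' : H (2 * (m %/ 2))%N <= H (2 * (m %/ 2) + 1)%N by apply: Hmono; lia.
  case: ifP => _; [exact: lt_le_trans (byo _) hm | exact: lt_le_trans (bye _) hm].
have [x [Fx io]] := wF y by_.
have [N1 h1] : exists N, forall n, (N <= n)%N -> ~ (pe x n = ye n).
  apply: not_io => hio; apply: nye; exists (pe x); split => //; by exists x.
have [N2 h2] : exists N, forall n, (N <= n)%N -> ~ (po x n = yo n).
  apply: not_io => hio; apply: nyo; exists (po x); split => //; by exists x.
have [m [Nm xm]] := io (2 * (N1 + N2))%N.
move: xm; rewrite /y; case: ifP => /eqP m2 xm.
  apply: (h2 (m %/ 2)%N); first by lia.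
  by rewrite /po; have -> : (2 * (m %/ 2) + 1 = m)%N by lia.
apply: (h1 (m %/ 2)%N); first by lia.
by rewrite /pe; have -> : (2 * (m %/ 2) = m)%N by lia.
Qed.


Lemma iter_double (H : nat -> R) : (forall m n, (m <= n)%N -> H m <= H n) ->
  forall j, d_le H (fun n => H (2 ^ j * n)%N) /\ b_le (fun n => H (2 ^ j * n)%N) H.
Proof.
move=> Hmono; elim=> [|j [IHd IHb]].
  have -> : (fun n => H (2 ^ 0 * n)%N) = H by apply: funext => n; rewrite mul1n.
  split; [by move=> G wG; exists G; split => //; exact: card_lexx
         | by move=> F wF; exists F; split => //; exact: card_lexx].
have -> : (fun n => H (2 ^ j.+1 * n)%N) = (fun n => (fun k => H (2 ^ j * k)%N) (2 * n)%N).
  by apply: funext => n /=; rewrite expnS mulnA [(2 ^ j * 2)%N]mulnC.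
have mono' : forall m n, (m <= n)%N -> H (2 ^ j * m)%N <= H (2 ^ j * n)%N.
  by move=> m n mn; apply: Hmono; rewrite leq_mul2l mn orbT.
split.
  exact: d_le_trans IHd (d_le_double mono').
exact: b_le_trans (b_le_double mono') IHb.
Qed.

End Main.

Lemma bern (R : realType) (a : R) (n : nat) : 1 <= a -> 1 + n%:R * (a - 1) <= a ^+ n.
Proof.
move=> a1; elim: n => [|n IH]; first by rewrite mul0r addr0 expr0.
rewrite exprS -natr1.
have h : 0 <= n%:R * (a - 1) by apply: mulr_ge0; rewrite ?subr_ge0.
nra.
Qed.

Lemma powH_mono (R : realType) (a : R) : 1 < a ->
  forall m n, (m <= n)%N -> (2 : R) `^ (a ^+ m) <= (2 : R) `^ (a ^+ n).
Proof.
move=> a1 m n mn; apply: ler_powR; first by rewrite ler1n.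
by apply: ler_weXn2l => //; apply: ltW.
Qed.

Lemma key (R : realType) (a b : R) : 1 < a -> 1 < b ->
  d_le (fun n => (2 : R) `^ (a ^+ n)) (fun n => (2 : R) `^ (b ^+ n)) /\ b_le (fun n => (2 : R) `^ (b ^+ n)) (fun n => (2 : R) `^ (a ^+ n)).
Proof.
move=> a1 b1.
have [j bj] : exists j, b <= a ^+ (2 ^ j).
  have a0 : 0 < a - 1 by rewrite subr_gt0.
  have := truncnS_gt (b / (a - 1)); rewrite ltr_pdivrMr //.
  set m := (_ .+1) => hm.
  exists m; apply: (le_trans (ltW hm)).
  apply: (le_trans _ (ler_weXn2l (ltW a1) (ltnW (ltn_expl m (ltnSn 1))))).
  apply: le_trans (bern m (ltW a1)); lra.
have le : forall n, (2 : R) `^ (b ^+ n) <= (2 : R) `^ (a ^+ (2 ^ j * n)%N).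
  move=> n; apply: ler_powR; first by rewrite ler1n.
  by rewrite exprM; apply: lerXn2r => //; rewrite qualifE /=; lra.
have [d1 b1'] := iter_double (powH_mono a1) j.
split.
  exact: d_le_trans d1 (d_le_mono le).
exact: b_le_trans (b_le_mono le) b1'.
Qed.

Theorem mainTheorem7 (R : realType) :
  (forall h : nat -> nat,
     (forall n : nat, (2 <= h n)%N) ->
     (forall m n : nat, (m <= n)%N -> (h m <= h n)%N) ->
     let H := fun n : nat => ((h n)%:R : R) in
     let G := fun n : nat => ((h (2 * n)%N)%:R : R) in
     d_eq H G /\ b_eq H G)
  /\
  (forall a b : R, 1 < a -> 1 < b ->
     let Ha := fun n : nat => (2 : R) `^ (a ^+ n) in
     let Hb := fun n : nat => (2 : R) `^ (b ^+ n) in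
     d_eq Ha Hb /\ b_eq Ha Hb).
Proof.
split.
  move=> h h2 hmono H G.
  have Hmono : forall m n, (m <= n)%N -> H m <= H n.
    by move=> m n mn; rewrite /H ler_nat; apply: hmono.
  have HG : forall n, H n <= G n.
    by move=> n; rewrite /H /G ler_nat; apply: hmono; lia.
  split; split.
  - exact: (d_le_double Hmono).
  - exact: d_le_mono HG.
  - exact: b_le_mono HG.
  - exact: (b_le_double Hmono).
move=> a b a1 b1 Ha Hb.
have [d1 b1'] := key a1 b1.
have [d2 b2'] := key b1 a1.
by split; split.
Qed.
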